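(* For all constants $0<\alpha\le \beta$ there is a constant $c>0$ such that the following holds. Let $k\le n$ be positive integers and let $h$ be an integer with $\alpha\log(n/k+1)\le h\le \beta\log(n/k+1)$ and $2\le h\le k$, and set $\ell=\lfloor k/h\rfloor$. Suppose that in the $\ell$-variant cup game on $n$ cups, some play of $T$ rounds ends with a cup of fill at least $4k$. Then $T\ge c\,h\,\ell^3$ (and hence $T=\Omega(k^3/h^2)$).
   Context: The $\ell$-variant cup game on $n$ cups ($\ell$ a positive integer): there are $n$ cups with integer fills, all initially $0$. In each round the player chooses an integer $k'\ge 0$ and an integer $q\ge1$ such that at least $2q$ cups have fill exactly $k'$ (if none exist the game ends). Among these cups, exactly $q$ are raised to fill $k'+1$; if $k'$ is a multiple of $\ell$ (a checkpoint $a\ell$, $a\ge0$), the other $q$ are left at $k'$, and otherwise $q$ other such cups are lowered to $k'-1$. (Thus a cup that has reached a checkpoint never goes below it.) *)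

(* Defs.v *)
From mathcomp Require Import all_boot.
From Stdlib Require Import Reals.

Set Implicit Arguments.
Unset Strict Implicit.
Unset Printing Implicit Defensive.

(* A configuration of the game on n cups: the (integer, in fact
   nonnegative) fill of each cup. Fills never go below 0 since 0 is a
   checkpoint, so nat is faithful. *)
Definition config (n : nat) := 'I_n -> nat.

Definition init_config (n : nat) : config n := fun _ => 0.

(* If k'
   is a checkpoint (multiple of l) the cups of D stay at k', otherwise
   they are lowered to k' - 1.  All other cups are unchanged. *)
Definition cup_round (l n : nat) (s s' : config n) : Prop :=
  exists (k' q : nat) (U D : {set 'I_n}),
    1 <= q /\ #|U| = q /\ #|D| = q /\ [disjoint U & D] /\
        (forall i, i \in U :|: D -> s i = k') /\
        (forall i, s' i =
           if i \in U then k'.+1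
           else if i \in D then (if l %| k' then k' else k'.-1)
           else s i).

Definition cup_play (l n T : nat) (s : nat -> config n) : Prop :=
  s 0 = @init_config n /\ forall t, t < T -> cup_round l (s t) (s t.+1).

(* Main.v *)
Require Import Defs.
From mathcomp Require Import all_boot.
From mathcomp Require Import zify.
Set Implicit Arguments.
Unset Strict Implicit.

Lemma sum_recr (v : nat -> nat) T :
  \sum_(t < T.+1) v t = \sum_(t < T) v t + v T.
Proof. by rewrite big_ord_recr. Qed.

Lemma cs_nat (v : nat -> nat) T :
  (\sum_(t < T) v t) ^ 2 <= (\sum_(t < T) (0 < v t : nat)) * \sum_(t < T) (v t) ^ 2.
Proof.
elim: T => [|T IH]; first by rewrite !big_ord0.
rewrite (sum_recr v) (sum_recr (fun t => (0 < v t : nat))) (sum_recr (fun t => v t ^ 2)).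
move: IH.
set Q := \sum_(i < T) v i. set R := \sum_(i < T) (0 < v i : nat).
set S := \sum_(i < T) v i ^ 2.
move: (v T) => w IH.
case: (posnP w) => [->|vp]; first by rewrite !addn0.
rewrite /nat_of_bool.
have key : 2 * Q * w <= R * w ^ 2 + S.
  case: (leqP (2 * Q * w) (R * w ^ 2 + S)) => // hlt.
  have h1 : (R * w ^ 2 + S) ^ 2 < (2 * Q * w) ^ 2 by rewrite ltn_exp2r.
  have h2 : 4 * (R * w ^ 2) * S <= (R * w ^ 2 + S) ^ 2.
    case: (leqP S (R * w ^ 2)) => h.
      have -> : R * w ^ 2 = S + (R * w ^ 2 - S) by lia.
      move: (R * w ^ 2 - S) => d. nia.
    have -> : S = R * w ^ 2 + (S - R * w ^ 2) by lia.
    move: (S - R * w ^ 2) => d. nia.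
  have h3 : (2 * Q * w) ^ 2 = 4 * w ^ 2 * Q ^ 2 by nia.
  have h4 : 4 * w ^ 2 * Q ^ 2 <= 4 * w ^ 2 * (R * S) by rewrite leq_mul2l IH orbT.
  nia.
nia.
Qed.

Lemma sum_uniq1 (P : nat -> bool) m :
  (forall a b, P a -> P b -> a = b) -> \sum_(a < m) (P a : nat) <= 1.
Proof.
move=> H; elim: m => [|m IH]; first by rewrite big_ord0.
rewrite (sum_recr (fun a => (P a : nat))).
case E: (P m); last by rewrite addn0.
have -> : \sum_(i < m) (P i : nat) = 0.
  apply/eqP; rewrite sum_nat_eq0; apply/forallP => i; apply/implyP => _.
  case Ei: (P i) => //. have := H _ _ Ei E. have := ltn_ord i. lia.
by [].
Qed.
Lemma split_at (F : nat -> nat) m n p : m <= p < n ->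
  \sum_(m <= j < n) F j = \sum_(m <= j < p) F j + (F p + \sum_(p.+1 <= j < n) F j).
Proof.
move=> /andP[mp pn].
by rewrite (big_cat_nat (F:=F) mp (ltnW pn)) (big_ltn (F:=F) pn).
Qed.

Lemma sum_pt (F G : nat -> nat) m n p : m <= p < n ->
  (forall j, m <= j < n -> j != p -> F j = G j) ->
  \sum_(m <= j < n) F j + G p = \sum_(m <= j < n) G j + F p.
Proof.
move=> mpn H; rewrite (split_at F mpn) (split_at G mpn).
case/andP: mpn => mp pn.
have E1 : \sum_(m <= j < p) F j = \sum_(m <= j < p) G j.
  apply: eq_big_nat => j /andP[a b]; apply: H.
  by rewrite a (ltn_trans b).
  by rewrite ltn_eqF.
have E2 : \sum_(p.+1 <= j < n) F j = \sum_(p.+1 <= j < n) G j.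
  apply: eq_big_nat => j /andP[a b]; apply: H.
  by rewrite b (leq_trans mp) // ltnW.
  by rewrite gtn_eqF.
rewrite E1 E2. lia.
Qed.

Lemma sum_eqr (F G : nat -> nat) m n :
  (forall j, m <= j < n -> F j = G j) ->
  \sum_(m <= j < n) F j = \sum_(m <= j < n) G j.
Proof. move=> H; exact: eq_big_nat. Qed.

Lemma sum_pt2 (F G : nat -> nat) m n p : m <= p -> p.+1 < n ->
  (forall j, m <= j < n -> j != p -> j != p.+1 -> F j = G j) ->
  \sum_(m <= j < n) F j + G p + G p.+1 = \sum_(m <= j < n) G j + F p + F p.+1.
Proof.
move=> mp pn H.
pose K := fun y => if y == p then G y else F y.
have e1 := @sum_pt F K m n p.
have e2 := @sum_pt K G m n p.+1.
have h1 : m <= p < n by rewrite mp ltnW.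
have h2 : m <= p.+1 < n by rewrite pn (leq_trans mp).
have := e1 h1; have := e2 h2.
rewrite /K eqxx (gtn_eqF (ltnSn p)).
move=> E2 E1.
have {}E1 : \sum_(m <= j < n) F j + G p =
            \sum_(m <= j < n) (if j == p then G j else F j) + F p.
  by apply: E1 => j _ hj; rewrite (negbTE hj).
have {}E2 : \sum_(m <= j < n) (if j == p then G j else F j) + G p.+1 =
            \sum_(m <= j < n) G j + F p.+1.
  apply: E2 => j hj hjp; rewrite /K; case: eqP => // /eqP hjq.
  by apply: H.
lia.
Qed.

Definition step_ok (l : nat) (N : nat -> nat -> nat) (t : nat) : Prop :=
  exists x q, 0 < q /\ 2 * q + N t x.+1 <= N t x /\ N t.+1 x.+1 = N t x.+1 + q /\
    N t.+1 x = (if l %| x then N t x else N t x - q) /\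
    (forall y, y != x -> y != x.+1 -> N t.+1 y = N t y).

Lemma ckpt_step l N t b : step_ok l N t -> l %| b -> N t b <= N t.+1 b.
Proof.
move=> [x [q [q0 [hc [h1 [h2 h3]]]]]] hb.
case: (eqVneq b x) => [e|bx].
  by rewrite e h2 -e hb.
case: (eqVneq b x.+1) => [->|bx1]; first by rewrite h1 leq_addr.
by rewrite h3.
Qed.

Definition model l (N : nat -> nat -> nat) T :=
  [/\ forall t, t < T -> step_ok l N t,
      forall t y, N t y.+1 <= N t y &
      forall y, 0 < y -> N 0 y = 0].

Lemma step_le l N t y : step_ok l N t -> y != t.+1 -> N t.+1 y <= N t y.
Abort.

Lemma step_nonx l N t : step_ok l N t ->
  exists x q, 0 < q /\ 2 * q + N t x.+1 <= N t x /\ N t.+1 x.+1 = N t x.+1 + q /\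
    N t.+1 x = (if l %| x then N t x else N t x - q) /\
    (forall y, y != x.+1 -> N t.+1 y <= N t y) /\
    (forall y, y != x -> N t y <= N t.+1 y) /\
    (forall y, y != x -> y != x.+1 -> N t.+1 y = N t y).
Proof.
move=> [x [q [q0 [hc [h1 [h2 h3]]]]]].
exists x, q; do 4 (split => //); split; [|split] => // y hy.
- case: (eqVneq y x) => [->|yx]; last by rewrite h3.
  by rewrite h2; case: (l %| x) => //; apply: leq_subr.
- case: (eqVneq y x.+1) => [->|yx]; last by rewrite h3.
  by rewrite h1 leq_addr.
Qed.

Lemma mono_le l N T t y z : model l N T -> y <= z -> N t z <= N t y.
Proof.
move=> [_ hm _] yz; rewrite -(subnKC yz); elim: (z - y) => [|d IH]; first by rewrite !addn0.
by rewrite addnS (leq_trans (hm _ _)).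
Qed.

Lemma ckpt_mono l N T b t t' : model l N T -> l %| b -> t <= t' -> t' <= T ->
  N t b <= N t' b.
Proof.
move=> [hs _ _] hb tt'; elim: t' tt' => [|t' IH]; first by rewrite leqn0 => /eqP ->.
rewrite leq_eqVlt => /orP [/eqP <- //|ht] hT.
apply: (leq_trans (IH ht (ltnW hT))); exact: ckpt_step (hs _ hT) hb.
Qed.

Lemma front l N T t y : model l N T -> t <= T -> t < y -> N t y = 0.
Proof.
move=> [hs hm h0]; elim: t y => [|t IH] y hT hy; first by apply: h0.
have [x [q [q0 [hc [h1 [h2 [hle [hge h3]]]]]]]] := step_nonx (hs _ hT).
have xt : x <= t.
  case: (leqP x t) => // tx; move: hc; rewrite (IH x (ltnW hT) tx); lia.
rewrite h3; first by apply: IH; lia.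
- apply/eqP => e; subst; lia.
- apply/eqP => e; subst; lia.
Qed.

Lemma staircase l N T t a j : model l N T -> t <= T -> j <= l ->
  0 < N t (a * l + j) -> N t (a * l + j) + j <= N t (a * l).
Proof.
move=> hM; case: (hM) => hs hm h0.
elim: t j => [|t IH] j hT hj hpos.
  case: j hj hpos => [|j] hj hpos; first by rewrite !addn0.
  by rewrite h0 ?addnS in hpos.
have [x [q [q0 [hc [h1 [h2 [hle [hge h3]]]]]]]] := step_nonx (hs _ hT).
have hck : N t (a * l) <= N t.+1 (a * l).
  by apply: ckpt_step (hs _ hT) _; rewrite dvdn_mull.
case: j hj hpos => [|j] hj hpos; first by rewrite !addn0.
case: (eqVneq (a * l + j.+1) x.+1) => [e|ne].
  have ex : x = a * l + j by move: e; rewrite addnS => /eqP; rewrite eqSS => /eqP.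
  have hx : 0 < N t (a * l + j) by rewrite -ex; lia.
  have := IH j (ltnW hT) (ltnW hj) hx.
  rewrite e h1 -ex. lia.
have hle' := hle _ ne.
have hpos' : 0 < N t (a * l + j.+1) by apply: leq_trans hpos hle'.
have := IH j.+1 (ltnW hT) hj hpos'. lia.
Qed.

Definition qint l (N : nat -> nat -> nat) a t :=
  \sum_((a * l).+1 <= y < a * l + l) (N t y - N t.+1 y).

Lemma not_dvd_mid l a x : a * l < x < a * l + l -> ~~ (l %| x).
Proof.
move=> /andP[h1 h2]; apply/negP => hd.
have := dvdn_sub hd (dvdn_mull a (dvdnn l)).
move=> hd2; have := dvdn_leq _ hd2; lia.
Qed.

Lemma qint_round l N a t x q :
  0 < q -> 2 * q + N t x.+1 <= N t x ->
  N t.+1 x = (if l %| x then N t x else N t x - q) ->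
  (forall y, y != x -> N t y <= N t.+1 y) ->
  qint l N a t = if (a * l < x < a * l + l) then q else 0.
Proof.
move=> q0 hc h2 hge; rewrite /qint.
case: ifP => hx.
  have := @sum_pt (fun y => N t y - N t.+1 y) (fun _ => 0) (a * l).+1 (a * l + l) x hx.
  rewrite big1_eq h2 (negbTE (not_dvd_mid hx)) addn0 add0n => -> //.
    lia.
  move=> j _ hj; have := hge j hj; lia.
rewrite big_nat_cond big1 // => y /andP[/andP[h3 h4] _].
have yx : y != x by apply/eqP => e; subst; rewrite h3 h4 in hx.
have := hge y yx; lia.
Qed.

Lemma interval_inv l N T a : model l N T -> 0 < l -> forall t, t <= T ->
  \sum_((a*l).+1 <= y < a*l + l.+1) (y - (a*l).+1) * N t y = \sum_(s < t) qint l N a s /\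
  \sum_((a*l).+1 <= y < a*l + l.+1) N t y ^ 2 + 2 * \sum_(s < t) qint l N a s ^ 2
    <= 2 * N T (a*l) * \sum_((a*l).+1 <= y < a*l + l.+1) N t y.
Proof.
move=> hM l0; case: (hM) => hs hm h0.
set b := a * l.
elim=> [|t IH] hT.
  have z : forall y, b.+1 <= y < b + l.+1 -> N 0 y = 0 by move=> y /andP[h _]; apply: h0; lia.
  have e1 : \sum_(b.+1 <= y < b + l.+1) (y - b.+1) * N 0 y = 0.
    by rewrite (@sum_eqr _ (fun _ => 0)) ?big1_eq // => y hy; rewrite z ?muln0.
  have e2 : \sum_(b.+1 <= y < b + l.+1) N 0 y ^ 2 = 0.
    by rewrite (@sum_eqr _ (fun _ => 0)) ?big1_eq // => y hy; rewrite z.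
  by rewrite e1 e2 !big_ord0; split.
have [x [q [q0 [hc [h1 [h2 [hle [hge h3]]]]]]]] := step_nonx (hs _ hT).
have hA : N t b <= N T b.
  apply: (ckpt_mono hM) => //; try lia; exact: dvdn_mull (dvdnn l).
have [IH1 IH2] := IH (ltnW hT).
have hq := qint_round a q0 hc h2 hge.
rewrite !(sum_recr (fun s => qint l N a s)) (sum_recr (fun s => qint l N a s ^ 2)) hq.
move: IH1 IH2.
set L := \sum_(b.+1 <= y < b + l.+1) (y - b.+1) * N t y.
set P := \sum_(b.+1 <= y < b + l.+1) N t y ^ 2.
set M := \sum_(b.+1 <= y < b + l.+1) N t y.
set L' := \sum_(b.+1 <= y < b + l.+1) (y - b.+1) * N t.+1 y.
set P' := \sum_(b.+1 <= y < b + l.+1) N t.+1 y ^ 2.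
set M' := \sum_(b.+1 <= y < b + l.+1) N t.+1 y.
set Q := \sum_(i < t) qint l N a i. set S := \sum_(i < t) qint l N a i ^ 2.
set A := N T b.
move=> IH1 IH2.
case: (eqVneq x b) => [xb|xnb].
  have hr : b.+1 <= b.+1 < b + l.+1 by lia.
  have hag : forall j, b.+1 <= j < b + l.+1 -> j != b.+1 -> N t.+1 j = N t j.
    move=> j hj hj1; apply: h3; [apply/eqP; lia | by rewrite xb].
  have eM := @sum_pt (fun y => N t.+1 y) (fun y => N t y) _ _ _ hr hag.
  have eP := @sum_pt (fun y => N t.+1 y ^ 2) (fun y => N t y ^ 2) _ _ _ hr
    (fun j hj hj1 => f_equal (fun z => z ^ 2) (hag j hj hj1)).
  have eL := @sum_pt (fun y => (y - b.+1) * N t.+1 y) (fun y => (y - b.+1) * N t y) _ _ _ hr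
    (fun j hj hj1 => f_equal (fun z => (j - b.+1) * z) (hag j hj hj1)).
  rewrite -/M -/M' -/P -/P' -/L -/L' in eM eP eL.
  rewrite subnn !mul0n in eL.
  have nx : ~~ (b < x < b + l) by rewrite xb ltnn.
  rewrite (negbTE nx) !addn0.
  rewrite xb in h1 hc.
  split; first lia.
  rewrite h1 in eM eP. nia.
case: (boolP (b < x < b + l)) => hx.
  have hp1 : b.+1 <= x by lia.
  have hp2 : x.+1 < b + l.+1 by lia.
  have hag : forall j, b.+1 <= j < b + l.+1 -> j != x -> j != x.+1 -> N t.+1 j = N t j.
    by move=> j _ h4 h5; apply: h3.
  have eM := @sum_pt2 (fun y => N t.+1 y) (fun y => N t y) _ _ _ hp1 hp2 hag.
  have eP := @sum_pt2 (fun y => N t.+1 y ^ 2) (fun y => N t y ^ 2) _ _ _ hp1 hp2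
    (fun j hj hj1 hj2 => f_equal (fun z => z ^ 2) (hag j hj hj1 hj2)).
  have eL := @sum_pt2 (fun y => (y - b.+1) * N t.+1 y) (fun y => (y - b.+1) * N t y) _ _ _ hp1 hp2
    (fun j hj hj1 hj2 => f_equal (fun z => (j - b.+1) * z) (hag j hj hj1 hj2)).
  rewrite -/M -/M' -/P -/P' -/L -/L' in eM eP eL.
  have nd : ~~ (l %| x) by apply: not_dvd_mid; exact: hx.
  rewrite (negbTE nd) in h2.
  rewrite h1 h2 in eM eP eL.
  have ew : x.+1 - b.+1 = (x - b.+1).+1 by lia.
  rewrite ew in eL.
  move: (x - b.+1) eL => w eL.
  have [r er] : exists r, N t x = N t x.+1 + 2 * q + r.
    by exists (N t x - N t x.+1 - 2 * q); lia.
  rewrite er in eM eP eL.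
  have e3 : N t x.+1 + 2 * q + r - q = N t x.+1 + q + r by lia.
  rewrite e3 in eM eP eL.
  move: (N t x.+1) eM eP eL => u eM eP eL.
  have eM2 : M' = M by lia.
  have eL2 : L' = L + q.
    clear -eL; move: eL; rewrite ?mulnDr ?mulSn ?mulnDr; lia.
  have eP2 : P' + 2 * q ^ 2 <= P.
    clear -eP; move: eP; rewrite !sqrnD; nia.
  split; first by rewrite eL2 IH1.
  rewrite eM2; lia.
have hag : forall j, b.+1 <= j < b + l.+1 -> N t.+1 j = N t j.
  move=> j hj; case: (eqVneq j x) => [e|jx].
    subst j.
    have ex : x = b + l by move: hx; lia.
    by rewrite h2 ex dvdn_addr ?dvdnn // /b dvdn_mull.
  apply: h3 => //; apply/eqP => e; subst j; lia.
have eM : M' = M by apply: sum_eqr => j hj; rewrite hag.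
have eP : P' = P by apply: sum_eqr => j hj; rewrite hag.
have eL : L' = L by apply: sum_eqr => j hj; rewrite hag.
rewrite eM eP eL addn0 (_ : 0 ^ 2 = 0) // addn0; split; lia.
Qed.

Lemma sum_nrecr (F : nat -> nat) m n : m <= n ->
  \sum_(m <= i < n.+1) F i = \sum_(m <= i < n) F i + F n.
Proof. by move=> h; rewrite big_nat_recr. Qed.

Lemma weighted_lb (f : nat -> nat) B b l :
  (forall y, y <= b + l -> B <= f y) ->
  l * (l - 1) * B <= 2 * \sum_(b.+1 <= y < b + l.+1) (y - b.+1) * f y.
Proof.
elim: l => [|l IH] H; first by rewrite mul0n.
rewrite addnS sum_nrecr; last by lia.
have h1 : l * (l - 1) * B <= 2 * \sum_(b.+1 <= y < b + l.+1) (y - b.+1) * f y.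
  by apply: IH => y hy; apply: H; lia.
have h2 : B <= f (b + l.+1) by apply: H; lia.
have -> : b + l.+1 - b.+1 = l by lia.
move: h1 h2; set S := \sum_(_ <= _ < _) _; clearbody S; move: (f (b + l.+1)) => z h1 h2.
clear IH H.
have -> : l.+1 - 1 = l by lia.
case: l h1 => [|l] h1; first by rewrite !mul0n.
have e : l.+1 - 1 = l by lia.
rewrite e in h1.
nia.
Qed.


Lemma sum_le_nat (F G : nat -> nat) m n :
  (forall j, m <= j < n -> F j <= G j) ->
  \sum_(m <= j < n) F j <= \sum_(m <= j < n) G j.
Proof.
move=> H; rewrite big_nat_cond [X in _ <= X]big_nat_cond.
by apply: leq_sum => j /andP[h _]; apply: H.
Qed.

Lemma interval_bound l N T a : model l N T -> 0 < l ->
  (N T (a * l + l) * (l * (l - 1))) ^ 2 <=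
    4 * (\sum_(t < T) (0 < qint l N a t : nat)) * (l * N T (a * l) ^ 2).
Proof.
move=> hM l0.
have [I1 I2] := interval_inv a hM l0 (leqnn T).
set b := a * l in I1 I2 *.
set A := N T b in I2 *.
set B := N T (b + l).
have hMl : \sum_(b.+1 <= y < b + l.+1) N T y <= l * A.
  apply: (leq_trans (@sum_le_nat _ (fun _ => A) _ _ _)).
    by move=> y hy; rewrite /A; apply: (mono_le _ hM); lia.
  by rewrite sum_nat_const_nat; apply: leq_mul => //; lia.
have hS : \sum_(s < T) qint l N a s ^ 2 <= l * A ^ 2.
  move: I2 hMl; set P := \sum_(_ <= _ < _) _ ^ 2; set M := \sum_(_ <= _ < _) _.
  set S := \sum_(s < T) _. clearbody P M S. nia.
have hL : l * (l - 1) * B <= 2 * \sum_(s < T) qint l N a s.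
  rewrite -I1; apply: weighted_lb => y hy; rewrite /B; exact: (mono_le _ hM).
have hcs := cs_nat (qint l N a) T.
move: hL hS hcs; set Q := \sum_(s < T) _; set S := \sum_(s < T) _; set R := \sum_(t < T) _.
clearbody Q S R => hL hS hcs.
have e1 : (B * (l * (l - 1))) ^ 2 <= (2 * Q) ^ 2 by rewrite leq_exp2r // mulnC.
have e2 : (2 * Q) ^ 2 = 4 * Q ^ 2 by rewrite expnMn.
move: (l * (l - 1)) e1 => ll e1.
nia.
Qed.

Lemma sum_le_const (v : nat -> nat) T : (forall t, t < T -> v t <= 1) ->
  \sum_(t < T) v t <= T.
Proof.
elim: T => [|T IH] H; first by rewrite big_ord0.
rewrite sum_recr; have := H T (ltnSn T); have := IH (fun t ht => H t (ltnW ht)); lia.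
Qed.

Lemma sum_split_bool (P : nat -> bool) m :
  \sum_(a < m) (~~ P a : nat) + \sum_(a < m) (P a : nat) = m.
Proof.
elim: m => [|m IH]; first by rewrite !big_ord0.
rewrite (sum_recr (fun a => (~~ P a : nat))) (sum_recr (fun a => (P a : nat))).
rewrite -[in RHS]IH; case: (P m) => /=; rewrite ?addn0 ?add0n ?addn1 ?addnS ?addSn // addnA.
Qed.

Lemma sum_mul_le (c Y : nat -> nat) X m :
  (forall a, a < m -> c a * X <= Y a) -> (\sum_(a < m) c a) * X <= \sum_(a < m) Y a.
Proof.
elim: m => [|m IH] H; first by rewrite big_ord0.
rewrite (sum_recr c) (sum_recr Y) mulnDl.
apply: leq_add; [apply: IH => a ha; apply: H; lia | exact: H].
Qed.

Lemma abstract_main l N T n k h K :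
  model l N T -> 0 < l -> 0 < h -> 0 < K ->
  N T 0 = n -> k <= 2 * h * l -> n + k <= k * K ^ h ->
  0 < N T (4 * h * l) ->
  h * (l * (l - 1) ^ 2) <= 4 * K ^ 2 * T.
Proof.
move=> hM l0 h0 K0 hn hk hK htop.
case: (hM) => hs hm hz.
pose m a := N T (a * l).
have stair : forall a, 0 < m a.+1 -> m a.+1 + l <= m a.
  move=> a hp; have := staircase (a:=a) hM (leqnn T) (leqnn l).
  by rewrite /m mulSn addnC in hp *; apply.
have top : forall i, i <= 2 * h -> i * l + 1 <= m (4 * h - i).
  elim=> [|i IH] hi.
    by rewrite mul0n add0n subn0 /m.
  have := IH (ltnW hi).
  have e : 4 * h - i = (4 * h - i.+1).+1 by lia.
  rewrite e => h1.
  have := stair _ (leq_trans _ h1); rewrite addn1 => /(_ isT) h2.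
  rewrite mulSn; lia.
have m2h : 2 * h * l + 1 <= m (2 * h).
  have := top (2 * h) (leqnn _); have -> : 4 * h - 2 * h = 2 * h by lia. done.
have mge : forall a, a <= 2 * h -> 1 <= m a.
  move=> a ha; apply: (leq_trans _ (mono_le _ hM (_ : a * l <= 2 * h * l))).
    by apply: leq_trans m2h; rewrite addn1.
  by rewrite leq_mul2r ha orbT.
pose bad a := K * m a.+1 < m a.
have badc : forall j, j <= 2 * h -> K ^ (\sum_(a < j) (bad a : nat)) * m j <= m 0.
  elim=> [|j IH] hj; first by rewrite big_ord0 expn0 mul1n.
  rewrite (sum_recr (fun a => (bad a : nat))) expnD.
  have h1 := IH (ltnW hj).
  have hmono : m j.+1 <= m j by apply: (mono_le _ hM); rewrite mulSn leq_addl.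
  case hb: (bad j) => /=.
    rewrite /bad in hb; rewrite expn1 -mulnA.
    apply: leq_trans h1; rewrite leq_mul2l; apply/orP; right; exact: ltnW.
  rewrite expn0 muln1; apply: leq_trans h1; rewrite leq_mul2l hmono orbT //.
have nbad : \sum_(a < 2 * h) (bad a : nat) < h.
  case: (leqP h (\sum_(a < 2 * h) (bad a : nat))) => // hb.
  have hb2 : K ^ h * (2 * h * l + 1) <= n.
    have := badc _ (leqnn (2 * h)); rewrite /m mul0n hn => hh.
    apply: leq_trans hh; apply: leq_mul => //; by rewrite leq_pexp2l.
  have : 1 <= K ^ h by rewrite expn_gt0 K0.
  move: (K ^ h) hK hb2 => u hK hb2 hu.
  nia.
have good_bound : forall a, a < 2 * h ->
    (~~ bad a : nat) * (l * (l - 1) ^ 2) <= 4 * K ^ 2 * \sum_(t < T) (0 < qint l N a t : nat).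
  move=> a ha; case hb: (bad a) => /=; first by rewrite mul0n.
  rewrite mul1n.
  have hB : 1 <= m a.+1 by apply: mge.
  have hib := interval_bound a hM l0.
  have e : a * l + l = a.+1 * l by rewrite mulSn addnC.
  rewrite e -/(m a.+1) -/(m a) in hib.
  have hA : m a <= K * m a.+1 by rewrite leqNgt; apply/negbT.
  move: hib hA hB; move: (m a) (m a.+1) (\sum_(t < T) _) => A B R hib hA hB.
  have h1 : (B * (l * (l - 1))) ^ 2 <= 4 * R * (l * (K * B) ^ 2).
    apply: leq_trans hib _; rewrite leq_mul2l; apply/orP; right.
    by rewrite leq_mul2l leq_exp2r // hA orbT.
  have h2 : B ^ 2 * (l * (l * (l - 1) ^ 2)) <= B ^ 2 * (l * (4 * K ^ 2 * R)).
    move: h1; rewrite !expnMn; move: (l - 1) => d. 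
    have -> : B ^ 2 * (l * (l * d ^ 2)) = B ^ 2 * (l ^ 2 * d ^ 2) by rewrite mulnA -expnMn; nia.
    nia.
  rewrite leq_pmul2l ?expn_gt0 ?hB // leq_pmul2l // in h2.
have sumR : \sum_(a < 2 * h) \sum_(t < T) (0 < qint l N a t : nat) <= T.
  rewrite exchange_big /=; apply: (@sum_le_const (fun t => \sum_(a < 2 * h) (0 < qint l N a t : nat))) => t ht.
  have [x [q [q0 [hc [h1 [h2 [hle [hge h3]]]]]]]] := step_nonx (hs _ ht).
  have hq := fun a => qint_round a q0 hc h2 hge.
  apply: (@sum_uniq1 (fun a => 0 < qint l N a t)) => a b.
  rewrite !hq; case: ifP => // /andP[a1 a2] _; case: ifP => // /andP[b1 b2] _.
  case: (ltngtP a b) => // hab.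
    have : a.+1 * l <= b * l by rewrite leq_mul2r hab orbT.
    rewrite mulSn; lia.
  have : b.+1 * l <= a * l by rewrite leq_mul2r hab orbT.
  rewrite mulSn; lia.
have := @sum_mul_le (fun a => (~~ bad a : nat))
  (fun a => 4 * K ^ 2 * \sum_(t < T) (0 < qint l N a t : nat)) (l * (l - 1) ^ 2) (2 * h) good_bound.
rewrite -big_distrr.
have := sum_split_bool bad (2 * h).
move: (\sum_(a < 2 * h) (~~ bad a : nat)) => G hG hGs.
have hGh : h <= G by lia.
apply: leq_trans (leq_mul hGh (leqnn _)) _.
apply: leq_trans hGs _; rewrite leq_mul2l sumR orbT //.
Qed.



Definition cnt n (c : config n) y := #|[set i | y <= c i]|.

Lemma card_disj n (A B : {set 'I_n}) : A :&: B = set0 -> #|A :|: B| = #|A| + #|B|.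
Proof. by move=> h; rewrite cardsU h cards0 subn0. Qed.

Lemma round_step l n (c c' : config n) : cup_round l c c' -> step_ok l (fun t => if t == 0 then cnt c else cnt c') 0.
Proof.
move=> [k' [q [U [D [q0 [hU [hD [hdis [hval hs']]]]]]]]].
rewrite /step_ok /=.
exists k', q; split => //.
have UD0 : U :&: D = set0 by apply/disjoint_setI0.
have inUD : forall i, i \in U -> c i = k' by move=> i hi; apply: hval; rewrite inE hi.
have inD : forall i, i \in D -> c i = k' by move=> i hi; apply: hval; rewrite inE hi orbT.
have notD : forall i, i \in U -> i \notin D.
  move=> i hi; apply/negP => hd; have : i \in U :&: D by rewrite inE hi hd.
  by rewrite UD0 inE.
split.
  have h1 : [set i | k'.+1 <= c i] :&: (U :|: D) = set0.
    apply/setP => i; rewrite !inE; apply/negbTE; apply/negP => /andP[h /orP[hi|hi]].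
      by move: h; rewrite inUD // ltnn.
    by move: h; rewrite inD // ltnn.
  have := card_disj h1; rewrite (card_disj UD0) hU hD => e.
  rewrite /cnt; apply: (@leq_trans #|[set i | k'.+1 <= c i] :|: (U :|: D)|).
    by rewrite e addnC mul2n addnn.
  apply: subset_leq_card; apply/subsetP => i.
  rewrite !inE => /orP[h|/orP[h|h]]; first exact: ltnW.
    by rewrite inUD.
  by rewrite inD.
split.
  have e : [set i | k'.+1 <= c' i] = [set i | k'.+1 <= c i] :|: U.
    apply/setP => i; rewrite !inE hs'.
    case hiU: (i \in U); first by rewrite orbT leqnn.
    case hiD: (i \in D); last by rewrite orbF.
    rewrite orbF inD //; case: (l %| k'); rewrite ?ltnn //; apply/negbTE; rewrite -leqNgt; exact: leq_pred.
  rewrite /cnt e card_disj ?hU //.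
  apply/setP => i; rewrite !inE; apply/negbTE; apply/negP => /andP[h hi].
  by move: h; rewrite inUD // ltnn.
split.
  case hl: (l %| k').
    rewrite /cnt; apply: eq_card => i; rewrite !inE hs'.
    case hiU: (i \in U); first by rewrite inUD // leqnSn leqnn.
    case hiD: (i \in D) => //; by rewrite hl inD // leqnn.
  have e : [set i | k' <= c' i] = [set i | k' <= c i] :\: D.
    apply/setP => i; rewrite !inE hs'.
    case hiU: (i \in U); first by rewrite inUD // (notD _ hiU) leqnSn leqnn.
    case hiD: (i \in D) => /=; last by [].
    rewrite hl; have k0 : 0 < k' by case: k' hl {hs' hval inUD inD} => //; rewrite dvdn0.
    lia.
  rewrite /cnt e cardsD.
  have -> : [set i | k' <= c i] :&: D = D.
    apply/setP => i; rewrite !inE; case hi: (i \in D); last by rewrite andbF.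
    by rewrite inD // leqnn.
  by rewrite hD.
move=> y hy1 hy2.
rewrite /cnt; apply: eq_card => i; rewrite !inE hs'.
case hiU: (i \in U).
  rewrite inUD //; move/eqP: hy1; move/eqP: hy2; lia.
case hiD: (i \in D) => //.
rewrite inD //; case: (l %| k') => //.
move/eqP: hy1; move/eqP: hy2; lia.
Qed.

From Stdlib Require Import Reals Lra.

Lemma cup_model l n T (s : nat -> config n) : cup_play l T s ->
  model l (fun t => cnt (s t)) T.
Proof.
move=> [h0 hs]; split.
- move=> t ht; exact: round_step (hs t ht).
- move=> t y; apply: subset_leq_card; apply/subsetP => i; rewrite !inE; exact: ltnW.
- move=> y hy; rewrite /cnt h0; apply/eqP; rewrite cards_eq0; apply/eqP/setP => i.
  by rewrite !inE /init_config leqn0; case: y hy.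
Qed.

Lemma expn_pow (a b : nat) : expn a b = Nat.pow a b.
Proof. elim: b => [|b IH]; first by []. by rewrite expnS IH. Qed.

Lemma INR_expn (a b : nat) : INR (expn a b) = (INR a ^ b)%R.
Proof. by rewrite expn_pow pow_INR. Qed.

Lemma Rexp_le a b : (a <= b)%R -> (exp a <= exp b)%R.
Proof.
move=> H; case: (Rle_lt_or_eq_dec a b H) => [h|->]; last by right.
by left; apply: exp_increasing.
Qed.

Lemma exp_mul_nat (h : nat) a : exp (INR h * a) = (exp a ^ h)%R.
Proof.
elim: h => [|h IH]; first by rewrite /= Rmult_0_l exp_0.
rewrite S_INR Rmult_plus_distr_r Rmult_1_l exp_plus IH /=; ring.
Qed.

Theorem theorem6p6 :
  forall alpha beta : R, (0 < alpha)%R -> (alpha <= beta)%R ->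
  exists c : R, (0 < c)%R /\
    forall (n k h T : nat) (s : nat -> 'I_n -> nat),
      1 <= k -> k <= n ->
      (alpha * ln (INR n / INR k + 1) <= INR h)%R ->
      (INR h <= beta * ln (INR n / INR k + 1))%R ->
      2 <= h -> h <= k ->
      cup_play (k %/ h) T s ->
      (exists i : 'I_n, 4 * k <= s T i) ->
      (c * INR h * INR (k %/ h) ^ 3 <= INR T)%R.
Proof.
move=> alpha beta ha _.
have [K hK] := INR_unbounded (exp (/ alpha)).
have hKpos : (0 < INR K)%R by apply: Rlt_trans (exp_pos _) hK.
have K0 : 0 < K by case: K hK hKpos => [|K] //= _; lra.
exists (/ (16 * INR K ^ 2))%R; split.
  apply: Rinv_0_lt_compat; apply: Rmult_lt_0_compat; first lra.
  exact: pow_lt.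
move=> n k h T s hk1 hkn hlow _ h2 hhk hplay [i hi].
set l := k %/ h.
have h0 : 0 < h by apply: leq_trans h2.
have l0 : 0 < l by rewrite /l divn_gt0.
have hl1 : l * h <= k by apply: leq_divM.
have hl2 : k < l.+1 * h by apply: ltn_ceil.
have hM := cup_model hplay.
have hnk : n + k <= k * expn K h.
  have kpos : (0 < INR k)%R by apply: lt_0_INR; apply/ltP.
  have hx : (0 < INR n / INR k + 1)%R.
    have : (0 <= INR n / INR k)%R by apply: Rmult_le_pos; [exact: pos_INR | exact: Rlt_le (Rinv_0_lt_compat _ kpos)].
    lra.
  have h1 : (ln (INR n / INR k + 1) <= INR h * / alpha)%R.
    apply: (Rmult_le_reg_l alpha) => //.
    have e : (alpha * (INR h * / alpha) = INR h)%R by field; lra.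
    rewrite e; lra.
  have h2' : (INR n / INR k + 1 <= INR K ^ h)%R.
    rewrite -(exp_ln _ hx); apply: Rle_trans (Rexp_le h1) _.
    rewrite exp_mul_nat; apply: pow_incr; split; [exact: Rlt_le (exp_pos _) | exact: Rlt_le].
  have h3 : (INR n + INR k <= INR k * INR K ^ h)%R.
    have e : (INR n + INR k = INR k * (INR n / INR k + 1))%R by field; lra.
    rewrite e; apply: Rmult_le_compat_l => //; lra.
  apply/leP; apply: INR_le; rewrite plus_INR mult_INR INR_expn; exact: h3.
have hnT : cnt (s T) 0 = n.
  rewrite /cnt; transitivity #|'I_n|; last exact: card_ord.
  apply: eq_card => j; by rewrite !inE.
have htop : 0 < cnt (s T) (4 * h * l).
  apply/card_gt0P; exists i; rewrite inE; apply: leq_trans hi; lia.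
have main := abstract_main hM l0 h0 K0 hnT (_ : k <= 2 * h * l) hnk htop.
have hfront : 4 * h * l <= T.
  case: (leqP (4 * h * l) T) => // hlt.
  by move: htop; rewrite (front hM (leqnn T) hlt).
have nat_bound : h * expn l 3 <= 16 * expn K 2 * T.
  have {}main := main ltac:(nia).
  case: (ltngtP l 1) => hl.
  - lia.
  - have : expn l 3 <= 4 * (l * expn (l - 1) 2).
      move: hl; have [d ->] : exists d, l = d.+1 by exists (l - 1); lia.
      move=> hd; rewrite subn1 /= !expnS expn0; nia.
    move=> hh; have := leq_mul (leqnn h) hh; move: main; move: (l * expn (l - 1) 2) => X; nia.
  - rewrite hl; have : 1 <= expn K 2 by rewrite expn_gt0 K0. nia.
have hR : (INR h * INR l ^ 3 <= 16 * INR K ^ 2 * INR T)%R.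
  have h5 := le_INR _ _ (elimT leP nat_bound).
  have e16 : INR 16 = 16%R by rewrite /=; ring.
  rewrite !mult_INR e16 in h5; rewrite /= ; lra.
have hK2 : (0 < 16 * INR K ^ 2)%R by apply: Rmult_lt_0_compat; [lra | exact: pow_lt].
apply: (Rmult_le_reg_l (16 * INR K ^ 2)) => //.
have e : (16 * INR K ^ 2 * (/ (16 * INR K ^ 2) * INR h * INR l ^ 3) = INR h * INR l ^ 3)%R.
  by field; lra.
by rewrite e.
Qed.
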